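(* Let $K \subset \mathbb R^3$ be a regular convex cone whose boundary is of class $C^k$, $k \geq 5$, and positively curved, and let $\gamma \subset \mathbb{RP}^2$ be the projective image of $\partial K$. Let $\alpha,\beta$ be $2\pi$-periodic real functions of class $C^{k-4}$, $C^{k-5}$ respectively, and let $y:\mathbb R \to \mathbb R^3$ be a $2\pi$-periodic solution of \[ y''' + 2\alpha y' + \alpha' y + \beta y = 0 \] such that $\det(y'',y',y) \equiv 1$, the projective image of $y$ is $\gamma$, and $y(t)$ makes exactly one turn around $K$ along $\partial K$ as $t$ runs over one period. Set $Y = (y''+\alpha y, y', y)$ (a $3\times 3$ matrix with these columns). Let $K^*$ be the dual cone of $K$ and $\gamma^*$ the projective image of $\partial K^*$ (the dual projective curve of $\gamma$). Then there exists a vector-valued solution $z:\mathbb R\to\mathbb R^3$ of the adjoint equation \[ z''' + 2\alpha z' + \alpha' z - \beta z = 0 \] which is a lift of $\gamma^*$ and satisfies $\det(z'',z',z) \equiv 1$, and the matrix $Z = (z''+\alpha z, z', z) \in SL(3,\mathbb R)$ is given by $Z = Y^{-T}Q$, where \[ Q = \begin{pmatrix} 0 & 0 & 1 \\ 0 & -1 & 0 \\ 1 & 0 & 0 \end{pmatrix}. \]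
   Context: A regular convex cone is a closed convex cone with non-empty interior containing no lines. The dual cone $K^*$ is the set of linear functionals nonnegative on $K$, identified with vectors in $\mathbb R^3$ via the standard inner product. ''Positively curved boundary'' means the boundary $\partial K\setminus\{0\}$ has everywhere positive curvature (in the directions transverse to the rays), so that its projective image $\gamma$ is a simple closed strictly convex curve without inflection points. A lift of a curve in $\mathbb{RP}^2$ is a curve in $\mathbb R^3\setminus\{0\}$ whose projective image is the given curve (pointwise in the parameter; here $z(t)$ projects to the point of $\gamma^*$ corresponding to the tangent line of $\gamma$ at the projective image of $y(t)$). *)

(* Defs.v *)
From HB Require Import structures.
From mathcomp Require Import all_boot all_order all_algebra.
From mathcomp Require Import all_classical all_reals all_analysis.
Set Implicit Arguments. Unset Strict Implicit. Unset Printing Implicit Defensive.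
Import Order.TTheory GRing.Theory Num.Theory.
Import numFieldNormedType.Exports.
Local Open Scope classical_set_scope.
Local Open Scope ring_scope.

Section Defs.
Variable R : realType.
Notation V := 'cV[R]_3.

Definition dot (u v : V) : R := (u^T *m v) 0 0.

Definition cols3 (a b c : V) : 'M[R]_3 :=
  \matrix_(i < 3, j < 3)
    (if (j : nat) == 0%N then a i 0 else if (j : nat) == 1%N then b i 0 else c i 0).

Definition is_convex_set (K : set V) : Prop :=
  forall x y (l : R), K x -> K y -> 0 <= l -> l <= 1 -> K (l *: x + (1 - l) *: y).

Definition is_cone (K : set V) : Prop :=
  forall x (l : R), K x -> 0 <= l -> K (l *: x).

Definition regular_convex_cone (K : set V) : Prop :=
  [/\ closed K, is_convex_set K, is_cone K, interior K !=set0 &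
      forall x, K x -> K (- x) -> x = 0].

Definition cone_boundary (K : set V) : set V := closure K `\` interior K.

Definition dual_cone (K : set V) : set V := [set f | forall x, K x -> 0 <= dot f x].

Definition same_ray (x p : V) : Prop := exists2 l : R, 0 < l & x = l *: p.

Definition Ck {W : normedModType R} (k : nat) (f : R -> W) : Prop :=
  (forall n, (n < k)%N -> forall x, derivable (iter n (@derive1 R W) f) x 1) /\
  continuous (iter k (@derive1 R W) f).

Definition periodic2pi {W : Type} (f : R -> W) : Prop :=
  forall t, f (t + 2 * pi) = f t.

Definition one_turn_along_boundary (K : set V) (c : R -> V) : Prop :=
  (forall t, cone_boundary K (c t) /\ c t != 0) /\
  (forall x, cone_boundary K x -> x != 0 ->
     exists t, [/\ 0 <= t, t < 2 * pi, same_ray x (c t) &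
        forall s, 0 <= s -> s < 2 * pi -> same_ray x (c s) -> s = t]).

(* "The boundary of K is of class C^k and positively curved": the projective
   image gamma of dK\{0} is a C^k simple closed curve without inflection
   points, i.e. it admits a 2pi-periodic C^k lift c running once along dK
   with det(c'', c', c) nowhere zero (regularity and nonvanishing curvature). *)
Definition Ck_positively_curved_boundary (k : nat) (K : set V) : Prop :=
  exists c : R -> V,
    [/\ Ck k c, periodic2pi c, one_turn_along_boundary K c &
        forall t, \det (cols3 (derive1 (derive1 c) t) (derive1 c t) (c t)) != 0].

Definition frame (alpha : R -> R) (y : R -> V) (t : R) : 'M[R]_3 :=
  cols3 (derive1 (derive1 y) t + alpha t *: y t) (derive1 y t) (y t).

Definition Qmat : 'M[R]_3 :=
  \matrix_(i < 3, j < 3)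
    (if ((i : nat) == 0%N) && ((j : nat) == 2%N) then 1
     else if ((i : nat) == 1%N) && ((j : nat) == 1%N) then -1
     else if ((i : nat) == 2%N) && ((j : nat) == 0%N) then 1 else 0).

Definition derivable3 (y : R -> V) : Prop :=
  forall t, [/\ derivable y t 1, derivable (derive1 y) t 1 &
                derivable (derive1 (derive1 y)) t 1].

(* z(t) represents the point of gamma* = P(dK* \ {0}) corresponding to the
   tangent line of gamma at [p]: up to a nonzero scalar, z(t) is a nonzero
   element of the dual cone annihilating p (the supporting/tangent plane). *)
Definition dual_lift_point (K : set V) (p q : V) : Prop :=
  q != 0 /\ exists2 c : R, c != 0 & dual_cone K (c *: q) /\ dot (c *: q) p = 0.

End Defs.

(* Main.v *)
Require Import Defs.
From HB Require Import structures.
From mathcomp Require Import all_boot all_order all_algebra.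
From mathcomp Require Import all_classical all_reals all_analysis.
From mathcomp Require Import ring lra.
Import Order.TTheory GRing.Theory Num.Theory.
Import numFieldNormedType.Exports.
Local Open Scope classical_set_scope.
Local Open Scope ring_scope.
Set Implicit Arguments. Unset Strict Implicit. Unset Printing Implicit Defensive.

Lemma det3 (R : comRingType) (A : 'M[R]_3) : \det A =
  A 0 0 * (A 1 1 * A 2 2 - A 1 2 * A 2 1)
  - A 0 1 * (A 1 0 * A 2 2 - A 1 2 * A 2 0)
  + A 0 2 * (A 1 0 * A 2 1 - A 1 1 * A 2 0).
Proof.
pose B (m n : nat) := A (inord m) (inord n).
have AB : forall i j, A i j = B i j by move=> i j; rewrite /B !inord_val.
rewrite (expand_det_row _ 0) !big_ord_recl big_ord0 /cofactor.
rewrite !(expand_det_row _ 0) !big_ord_recl !big_ord0 /cofactor !det_mx11 !mxE /=.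
rewrite !AB /=. rewrite /bump /=.
rewrite !expr0 !expr1 /=. ring.
Qed.
Lemma zz2 (V : zmodType) (A H Y P : V) : A - H + Y - (A + P) = Y - P - H.
Proof. rewrite opprD addrA [A - H + Y - A]addrAC [A - H - A]addrAC subrr add0r (addrC (-H)) addrAC //. Qed.

Lemma zz (V : zmodType) (a b w : V) : b = a + (b - (a + w)) + w.
Proof. by rewrite opprD addrCA !addrA addrK subrK. Qed.

Section S.
Variable R : realType.
Notation V := 'cV[R]_3.

Lemma int_of_ball (K : set V) p r : 0 < r ->
  (forall q, `|q - p| < r -> K q) -> interior K p.
Proof.
move=> r0 H; rewrite /interior /=; apply/nbhs_ballP; exists r => //= q.
rewrite -ball_normE /= => hq; apply: H; by rewrite -normrN opprB.
Qed.

Lemma ball_of_int (K : set V) p : interior K p ->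
  exists2 r, 0 < r & (forall q, `|q - p| < r -> K q).
Proof.
move=> /nbhs_ballP [r r0 H]; exists r => // q hq; apply: H.
by rewrite -ball_normE /= -normrN opprB.
Qed.

Lemma deriv_est (f : R -> V) t : derivable f t 1 -> forall eps, 0 < eps ->
  exists2 d, 0 < d & forall h, h != 0 -> `|h| < d ->
    `|f (h + t) - f t - h *: derive1 f t| <= eps * `|h|.
Proof.
move=> df eps e0.
have := df; rewrite /derivable => /cvg_ex [l Hl].
have dl : derive1 f t = l.
  by rewrite derive1E /derive; apply: cvg_lim.
move/cvgrPdist_le : Hl => /(_ eps e0).
rewrite /= => /nbhs_ballP [d d0 Hd].
exists d => // h h0 hd.
have : ball 0 d h by rewrite -ball_normE /= sub0r normrN.
move=> /Hd /(_ h0) /=.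
rewrite dl [_%:A]mulr1 => H.
have -> : f (h + t) - f t - h *: l = - (h *: (l - h^-1 *: (f (h + t) - f t))).
  by rewrite scalerBr scalerA mulfV // scale1r opprB.
rewrite normrN normrZ mulrC ler_wpM2r //.
Qed.
Lemma add_closed (K : set V) x y : is_convex_set K -> is_cone K -> K x -> K y -> K (x + y).
Proof.
move=> cv cn kx ky.
have h1 : 0 <= 1/2 :> R by rewrite divr_ge0.
have h2 : 1/2 <= 1 :> R by rewrite ler_pdivrMr // mul1r ler1n.
have := cn _ 2 (cv x y (1/2) kx ky h1 h2) (ler0n _ 2).
have -> : 2 *: ((1/2) *: x + (1 - 1/2) *: y) = x + y :> V.
  rewrite scalerDr !scalerA. 
  have -> : 1 - 1/2 = 1/2 :> R by field.
  by rewrite mul1r mulfV ?scale1r // pnatr_eq0.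
done.
Qed.

Lemma Lkey (K : set V) e0 rho c w lam p :
  is_convex_set K -> is_cone K -> 0 < rho ->
  (forall q, `|q - e0| < rho -> K q) -> 0 < c -> K w -> 0 < lam ->
  `|c *: e0 + w - lam *: p| <= c * rho / 2 -> interior K p.
Proof.
move=> cv cn r0 Hb c0 kw l0 hn.
apply: (@int_of_ball _ _ (c * rho / (2 * lam))); first by rewrite divr_gt0 ?mulr_gt0.
move=> q hq.
pose e' := e0 + c^-1 *: (lam *: q - (c *: e0 + w)).
have he' : `|e' - e0| < rho.
  rewrite /e' addrC addKr normrZ gtr0_norm ?invr_gt0 //.
  rewrite ltr_pdivrMl //.
  have -> : lam *: q - (c *: e0 + w) = lam *: (q - p) - (c *: e0 + w - lam *: p).
    by rewrite scalerBr opprB addrA subrK.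
  apply: (le_lt_trans (ler_normB _ _)).
  rewrite normrZ gtr0_norm //.
  have : lam * `|q - p| < c * rho / 2.
    move: hq; rewrite ltr_pdivlMr ?mulr_gt0 // => h; rewrite ltr_pdivlMr //.
    by have -> : lam * `|q - p| * 2 = `|q - p| * (2 * lam) by ring.
  move=> h1; lra.
have Klq : K (lam *: q).
  have -> : lam *: q = c *: e' + w.
    rewrite /e' scalerDr scalerA mulfV ?gt_eqF // scale1r.
    by rewrite opprD addrCA !addrA addrK subrK.
  apply: add_closed => //; apply: cn; [exact: Hb he' | exact: ltW].
have -> : q = lam^-1 *: (lam *: q) by rewrite scalerA mulVf ?gt_eqF // scale1r.
by apply: cn => //; rewrite invr_ge0 ltW.
Qed.
Lemma noflat (K : set V) (y : R -> V) t a b e0 rho :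
  is_convex_set K -> is_cone K -> (forall s, K (y s)) -> derivable y t 1 ->
  ~ interior K (y t) -> 0 < rho -> (forall q, `|q - e0| < rho -> K q) ->
  e0 = a *: y t + b *: derive1 y t -> False.
Proof.
move=> cv cn Ky dy nint r0 Hb he0.
have a1 : 0 < 1 + `|a| by rewrite ltr_pwDl.
have Na : - `|a| <= a by apply: lerNnormlW.
have [b0|b0] := eqVneq b 0.
  pose c := 1 / (1 + `|a|).
  have c0 : 0 < c by rewrite divr_gt0.
  have lam0 : 0 < c * a + 1.
    have : c * `|a| < 1 by rewrite /c mul1r ltr_pdivrMl // mulr1 ltrDr.
    have : - (c * `|a|) <= c * a by rewrite -mulrN; apply: ler_wpM2l; [exact: ltW | exact: Na].
    lra.
  apply: nint; apply: (@Lkey K e0 rho c (y t) (c * a + 1) (y t)) => //.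
  rewrite he0 b0 scale0r addr0 scalerA scalerDl scale1r subrr normr0.
  by rewrite divr_ge0 ?mulr_ge0 ?ltW.
have bn : 0 < `|b| by rewrite normr_gt0.
have [d d0 Hd] := @deriv_est _ _ dy _ (divr_gt0 r0 (mulr_gt0 (ltr0n _ 2) bn)).
pose m := Num.min d (`|b| / (1 + `|a|)) / 2.
have m0 : 0 < m by rewrite /m divr_gt0 // lt_min d0 divr_gt0.
have md : m < d.
  have : Num.min d (`|b| / (1 + `|a|)) <= d by rewrite ge_min lexx.
  rewrite /m; lra.
have mb : m * (1 + `|a|) < `|b|.
  have : Num.min d (`|b| / (1 + `|a|)) <= `|b| / (1 + `|a|) by rewrite ge_min lexx orbT.
  move: m0; rewrite -ltr_pdivlMr //; rewrite /m; lra.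
pose h := - (m * b / `|b|).
have hn : `|h| = m.
  by rewrite /h normrN normrM normrV ?unitfE ?gt_eqF // normrM (gtr0_norm m0) normr_id mulfK ?gt_eqF.
have h0 : h != 0 by rewrite -normr_eq0 hn gt_eqF.
pose c := m / `|b|.
have c0 : 0 < c by rewrite divr_gt0.
have cb : c * b = - h by rewrite /h opprK /c mulrAC.
have lam0 : 0 < c * a + 1.
  have : c * `|a| < 1.
    rewrite /c mulrAC ltr_pdivrMr // mul1r.
    move: mb; rewrite mulrDr mulr1; have := normr_ge0 a; nra.
  have : - (c * `|a|) <= c * a by rewrite -mulrN; apply: ler_wpM2l; [exact: ltW | exact: Na].
  lra.
apply: nint; apply: (@Lkey K e0 rho c (y (h + t)) (c * a + 1) (y t)) => //.
have -> : c *: e0 + y (h + t) - (c * a + 1) *: y t = y (h + t) - y t - h *: derive1 y t.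
  rewrite he0 scalerDr !scalerA cb scalerDl scale1r scaleNr.
  exact: zz2.
apply: (le_trans (Hd h h0 _)); first by rewrite hn.
rewrite hn /c le_eqVlt; apply/orP; left; apply/eqP.
by field; rewrite gt_eqF.
Qed.
Lemma dotE (a b : V) : dot a b = a 0 0 * b 0 0 + a 1 0 * b 1 0 + a 2 0 * b 2 0.
Proof.
rewrite /dot mxE !big_ord_recl big_ord0 !mxE addr0 /=.
have -> : (lift ord0 ord0 : 'I_3) = 1 by apply/val_inj.
have -> : (lift ord0 (lift ord0 ord0) : 'I_3) = 2 by apply/val_inj.
by rewrite addrA.
Qed.

Lemma dot_lin n (a b : R) (u w : V) : dot n (a *: u + b *: w) = a * dot n u + b * dot n w.
Proof. rewrite !dotE !mxE; ring. Qed.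

Lemma frac01 (x y : R) : 0 < x -> x < y -> 0 < x / y /\ x / y <= 1.
Proof.
move=> x0 xy; have y0 : 0 < y by apply: lt_trans xy.
split; first by rewrite divr_gt0.
by rewrite ler_pdivrMr // mul1r ltW.
Qed.

Lemma support (K : set V) (y : R -> V) t (n : V) :
  regular_convex_cone K -> (forall s, K (y s)) -> derivable y t 1 ->
  ~ interior K (y t) ->
  (forall x, dot n x = 0 -> exists a b, x = a *: y t + b *: derive1 y t) ->
  exists2 c, c != 0 & forall x, K x -> 0 <= c * dot n x.
Proof.
case=> _ cv cn [e ie] _ Ky dy nint dec.
have [r r0 Hr] := @ball_of_int _ _ ie.
exists (dot n e).
  apply/negP => /eqP /dec [a [b he]].
  exact: (@noflat K y t a b e r cv cn Ky dy nint r0 Hr he).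
move=> x Kx; rewrite leNgt; apply/negP => H.
pose c := dot n e; pose nx := dot n x.
pose l := nx / (nx - c).
have [l0 l1] : 0 < l /\ l <= 1.
  case: (ltgtP c 0) => c0.
  - have nx0 : 0 < nx by move: H; rewrite -/c -/nx nmulr_rlt0.
    apply: frac01 => //; lra.
  - have nx0 : nx < 0 by move: H; rewrite -/c -/nx pmulr_rlt0.
    have -> : l = (- nx) / (- (nx - c)) by rewrite /l invrN mulrN mulNr opprK.
    apply: frac01; lra.
  - by move: H; rewrite -/c c0 mul0r ltxx.
have ln0 : nx - c != 0.
  apply/negP => /eqP h0; move: l0; rewrite /l h0 invr0 mulr0 ltxx //.
pose e0 := l *: e + (1 - l) *: x.
have he0 : dot n e0 = 0.
  rewrite dot_lin -/c -/nx /l; field => //.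
have [a [b hab]] := dec _ he0.
apply: (@noflat K y t a b e0 (l * r) cv cn Ky dy nint (mulr_gt0 l0 r0)) => // q hq.
pose e'' := e + l^-1 *: (q - e0).
have Ke'' : K e''.
  apply: Hr; rewrite /e'' addrAC subrr add0r normrZ gtr0_norm ?invr_gt0 //.
  by rewrite ltr_pdivrMl.
have -> : q = l *: e'' + (1 - l) *: x.
  rewrite /e'' scalerDr scalerA mulfV ?gt_eqF // scale1r /e0.
  exact: zz.
apply: cv => //; exact: ltW.
Qed.
Definition HD (f : R -> R) t d := derivable f t 1 /\ derive1 f t = d.

Lemma HD_of (f : R -> R) t : derivable f t 1 -> HD f t (derive1 f t).
Proof. by []. Qed.

Lemma HD_eq (f : R -> R) t d d' : HD f t d -> d = d' -> HD f t d'.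
Proof. by move=> ? <-. Qed.

Lemma HD_ext (f g : R -> R) t d : (forall s, f s = g s) -> HD g t d -> HD f t d.
Proof. by move=> /funext ->. Qed.

Lemma HD_mul (f g : R -> R) t df dg : HD f t df -> HD g t dg ->
  HD (fun s => f s * g s) t (df * g t + f t * dg).
Proof.
move=> [hf ef] [hg eg]; split; first exact: (derivableM hf hg).
rewrite derive1E; have := deriveM hf hg; rewrite /= => ->.
by rewrite -!derive1E ef eg /GRing.scale /= addrC (mulrC (g t)).
Qed.

Lemma HD_add (f g : R -> R) t df dg : HD f t df -> HD g t dg ->
  HD (fun s => f s + g s) t (df + dg).
Proof.
move=> [hf ef] [hg eg]; split; first exact: (derivableD hf hg).
rewrite derive1E; have := deriveD hf hg; rewrite /= => ->.
by rewrite -!derive1E ef eg.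
Qed.

Lemma HD_sub (f g : R -> R) t df dg : HD f t df -> HD g t dg ->
  HD (fun s => f s - g s) t (df - dg).
Proof.
move=> [hf ef] [hg eg]; split; first exact: (derivableB hf hg).
rewrite derive1E; have := deriveB hf hg; rewrite /= => ->.
by rewrite -!derive1E ef eg.
Qed.

Lemma compD (Y : R -> V) t (i : 'I_3) : derivable Y t 1 ->
  HD (fun s => Y s i 0) t (derive1 Y t i 0).
Proof.
move=> dY; have := dY; move/derivable_mxP => H; split; first exact: H.
by rewrite !derive1E derive_mx // mxE.
Qed.

Lemma vecD (Y : R -> V) t (dY : V) : (forall i, HD (fun s => Y s i 0) t (dY i 0)) ->
  derivable Y t 1 /\ derive1 Y t = dY.
Proof.
move=> H.
have dd : derivable Y t 1.
  apply/derivable_mxP => i j; rewrite (ord1 j); exact: (H i).1.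
split => //; apply/matrixP => i j; rewrite (ord1 j).
by rewrite derive1E derive_mx // mxE -derive1E (H i).2.
Qed.
Definition cross (a b : V) : V := \col_(i < 3)
  (if (i : nat) == 0%N then a 1 0 * b 2 0 - a 2 0 * b 1 0
   else if (i : nat) == 1%N then a 2 0 * b 0 0 - a 0 0 * b 2 0
   else a 0 0 * b 1 0 - a 1 0 * b 0 0).

Lemma cross0 a b : cross a b 0 0 = a 1 0 * b 2 0 - a 2 0 * b 1 0.
Proof. by rewrite mxE. Qed.
Lemma cross1 a b : cross a b 1 0 = a 2 0 * b 0 0 - a 0 0 * b 2 0.
Proof. by rewrite mxE. Qed.
Lemma cross2 a b : cross a b 2 0 = a 0 0 * b 1 0 - a 1 0 * b 0 0.
Proof. by rewrite mxE. Qed.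

Lemma vec3P (u v : V) : u 0 0 = v 0 0 -> u 1 0 = v 1 0 -> u 2 0 = v 2 0 -> u = v.
Proof.
move=> h0 h1 h2; apply/matrixP => i j; rewrite (ord1 j).
case: i => [[|[|[|//]]] Hi].
- by have -> : Ordinal Hi = 0 by apply/val_inj.
- by have -> : Ordinal Hi = 1 by apply/val_inj.
- by have -> : Ordinal Hi = 2 by apply/val_inj.
Qed.

Lemma vec3_all (P : 'I_3 -> Prop) : P 0 -> P 1 -> P 2 -> forall i, P i.
Proof.
move=> h0 h1 h2 i; case: i => [[|[|[|//]]] Hi].
- by have -> : Ordinal Hi = 0 by apply/val_inj.
- by have -> : Ordinal Hi = 1 by apply/val_inj.
- by have -> : Ordinal Hi = 2 by apply/val_inj.
Qed.

Lemma sum3 (F : 'I_3 -> R) : \sum_(k < 3) F k = F 0 + F 1 + F 2.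
Proof.
rewrite !big_ord_recl big_ord0 addr0 addrA.
have -> : (lift ord0 ord0 : 'I_3) = 1 by apply/val_inj.
by have -> : (lift ord0 (lift ord0 ord0) : 'I_3) = 2 by apply/val_inj.
Qed.

Ltac crossE := rewrite ?cross0 ?cross1 ?cross2.

Lemma HD_cross (a b : R -> V) t : derivable a t 1 -> derivable b t 1 ->
  derivable (fun s => cross (a s) (b s)) t 1 /\
  derive1 (fun s => cross (a s) (b s)) t = cross (derive1 a t) (b t) + cross (a t) (derive1 b t).
Proof.
move=> da db; apply: vecD; apply: vec3_all.
- eapply HD_eq.
    apply: HD_ext => [s|]; first by rewrite cross0.
    by apply: HD_sub; apply: HD_mul; apply: compD.
  by rewrite mxE !cross0; ring.
- eapply HD_eq.
    apply: HD_ext => [s|]; first by rewrite cross1.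
    by apply: HD_sub; apply: HD_mul; apply: compD.
  by rewrite mxE !cross1; ring.
- eapply HD_eq.
    apply: HD_ext => [s|]; first by rewrite cross2.
    by apply: HD_sub; apply: HD_mul; apply: compD.
  by rewrite mxE !cross2; ring.
Qed.

Lemma crossK (u w v : V) : cross u w + cross v v = cross u w.
Proof. apply: vec3P; rewrite !mxE /=; ring. Qed.

Lemma ode_comp (u3 u1 u0 : V) a a' b (i : 'I_3) :
  u3 + (2 * a) *: u1 + a' *: u0 + b *: u0 = 0 ->
  u3 i 0 = - (2 * a) * u1 i 0 - a' * u0 i 0 - b * u0 i 0.
Proof.
move=> h; have := congr1 (fun M : V => M i 0) h; rewrite !mxE => h'.
rewrite -[LHS]subr0 -h'; ring.
Qed.

Lemma alg2 (u3 u2 u1 u0 : V) a a' b :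
  u3 + (2 * a) *: u1 + a' *: u0 + b *: u0 = 0 ->
  cross u3 u0 + cross u2 u1 = cross u2 u1 - (2 * a) *: cross u1 u0.
Proof.
move=> h; have := ode_comp 0 h; have := ode_comp 1 h; have := ode_comp 2 h.
move=> h2 h1 h0.
apply: vec3P; rewrite !mxE /=; [rewrite h1 h2 | rewrite h2 h0 | rewrite h0 h1]; ring.
Qed.

Lemma alg3 (u3 u2 u1 u0 : V) a a' b :
  u3 + (2 * a) *: u1 + a' *: u0 + b *: u0 = 0 ->
  cross u3 u1 + cross u2 u2 - (2 * a') *: cross u1 u0
    - (2 * a) *: (cross u2 u0 + cross u1 u1)
  + (2 * a) *: cross u2 u0 + a' *: cross u1 u0 - b *: cross u1 u0 = 0.
Proof.
move=> h; have := ode_comp 0 h; have := ode_comp 1 h; have := ode_comp 2 h.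
move=> h2 h1 h0.
apply: vec3P; rewrite !mxE /=; [rewrite h1 h2 | rewrite h2 h0 | rewrite h0 h1]; ring.
Qed.

Ltac grabD H := match type of H with ?X = _ => constr:(X) end.

Lemma alg_det (u2 u1 u0 : V) a :
  \det (cols3 u2 u1 u0) = 1 ->
  \det (cols3 (cross u2 u1 - (2 * a) *: cross u1 u0) (cross u2 u0) (cross u1 u0)) = 1.
Proof.
rewrite !det3 !mxE /= => h.
let X := grabD h in transitivity (X ^+ 2); last by rewrite h expr1n.
rewrite ?mxE /=; ring.
Qed.

Lemma dotZ (c : R) (n x : V) : dot (c *: n) x = c * dot n x.
Proof. rewrite !dotE !mxE; ring. Qed.

Lemma dot_cross0 (u1 u0 : V) : dot (cross u1 u0) u0 = 0.
Proof. rewrite dotE !mxE /=; ring. Qed.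

Lemma alg_nz (u2 u1 u0 : V) : \det (cols3 u2 u1 u0) = 1 -> cross u1 u0 != 0.
Proof.
move=> h; apply/negP => /eqP h0.
have : dot (cross u1 u0) u2 = 1.
  rewrite -h dotE det3 !mxE /=; ring.
by rewrite h0 dotE !mxE /= !mul0r !addr0 => /eqP; rewrite eq_sym oner_eq0.
Qed.

Lemma alg_dec (u2 u1 u0 x : V) : \det (cols3 u2 u1 u0) = 1 ->
  dot (cross u1 u0) x = 0 ->
  x = \det (cols3 u2 u1 x) *: u0 + \det (cols3 u2 x u0) *: u1.
Proof.
move=> h hd.
have e : forall i, x i 0 = x i 0 * \det (cols3 u2 u1 u0) - dot (cross u1 u0) x * u2 i 0.
  by move=> i; rewrite h hd mulr1 mul0r subr0.
apply: vec3P; rewrite e !mxE !det3 !dotE !mxE /=; ring.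
Qed.

Lemma alg_frame (u2 u1 u0 : V) a : \det (cols3 u2 u1 u0) = 1 ->
  (cols3 (u2 + a *: u0) u1 u0)^T *m
    cols3 ((cross u2 u1 - (2 * a) *: cross u1 u0) + a *: cross u1 u0) (cross u2 u0) (cross u1 u0)
  = Qmat R.
Proof.
rewrite det3 !mxE /= => h.
apply/matrixP => i j; move: i j; apply: vec3_all; apply: vec3_all;
  rewrite !mxE sum3 !mxE /=;
  let X := grabD h in
  first [ring | (transitivity X; [ring | exact h]) | (transitivity (- X); [ring | by rewrite h])].
Qed.

Lemma HD_cst (c : R) t : HD (fun _ => c) t 0.
Proof. split; [exact: derivable_cst | exact: derive1_cst]. Qed.

Lemma HD_scal (al : R -> R) (C : R -> V) t : derivable al t 1 -> derivable C t 1 ->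
  derivable (fun s => al s *: C s) t 1 /\
  derive1 (fun s => al s *: C s) t = derive1 al t *: C t + al t *: derive1 C t.
Proof.
move=> da dC; apply: vecD => i.
eapply HD_eq.
  apply: HD_ext => [s|]; first by rewrite mxE.
  by apply: HD_mul; [apply: HD_of | apply: compD].
by rewrite !mxE.
Qed.

Lemma HD_G (A B C E : R -> V) (al : R -> R) t :
  derivable A t 1 -> derivable B t 1 -> derivable C t 1 -> derivable E t 1 ->
  derivable al t 1 ->
  derivable (fun s => cross (A s) (B s) - (2 * al s) *: cross (C s) (E s)) t 1 /\
  derive1 (fun s => cross (A s) (B s) - (2 * al s) *: cross (C s) (E s)) t =
   cross (derive1 A t) (B t) + cross (A t) (derive1 B t)
   - (2 * derive1 al t) *: cross (C t) (E t)
   - (2 * al t) *: (cross (derive1 C t) (E t) + cross (C t) (derive1 E t)).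
Proof.
move=> dA dB dC dE dal.
have [h1 h2] := HD_cross dA dB.
have [h3 h4] := HD_cross dC dE.
have [h5 h6] : HD (fun s => 2 * al s) t (2 * derive1 al t).
  eapply HD_eq; first by apply: HD_mul; [apply: HD_cst | apply: HD_of].
  by rewrite mul0r add0r.
have [h7 h8] := HD_scal h5 h3.
split; first exact: (derivableB h1 h7).
rewrite derive1E (deriveB h1 h7) -!derive1E h2 h8 h4 h6.
by rewrite opprD addrA.
Qed.
End S.

Unset Implicit Arguments.

Theorem lemma2 (R : realType) (K : set 'cV[R]_3) (k : nat)
  (alpha beta : R -> R) (y : R -> 'cV[R]_3) :
  regular_convex_cone K ->
  (5 <= k)%N ->
  Ck_positively_curved_boundary k K ->
  periodic2pi alpha -> periodic2pi beta ->
  Ck (k - 4) alpha -> Ck (k - 5) beta ->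
  periodic2pi y -> derivable3 y ->
  (forall t, derive1 (derive1 (derive1 y)) t + (2 * alpha t) *: derive1 y t
             + derive1 alpha t *: y t + beta t *: y t = 0) ->
  (forall t, \det (cols3 (derive1 (derive1 y) t) (derive1 y t) (y t)) = 1) ->
  one_turn_along_boundary K y ->
  exists z : R -> 'cV[R]_3,
    [/\ derivable3 z,
        (forall t, derive1 (derive1 (derive1 z)) t + (2 * alpha t) *: derive1 z t
                   + derive1 alpha t *: z t - beta t *: z t = 0),
        (forall t, dual_lift_point K (y t) (z t)),
        (forall t, \det (cols3 (derive1 (derive1 z) t) (derive1 z t) (z t)) = 1) &
        (forall t, frame alpha z t = (invmx (frame alpha y t))^T *m Qmat R)].
Proof.
move=> Kreg k5 _ _ _ Ca _ _ d3 Hode Hdet [Hbd _].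
have da : forall t, derivable alpha t 1.
  move=> t; have h : (0 < k - 4)%N by rewrite subn_gt0.
  exact: (Ca.1 0%N h t).
have D1 : forall t, derivable y t 1 by move=> t; case: (d3 t).
have D2 : forall t, derivable (derive1 y) t 1 by move=> t; case: (d3 t).
have D3 : forall t, derivable (derive1 (derive1 y)) t 1 by move=> t; case: (d3 t).
pose z := fun s => cross (derive1 y s) (y s).
have S1 : forall t, derivable z t 1 /\ derive1 z t = cross (derive1 (derive1 y) t) (y t).
  move=> t; have [h1 h2] := HD_cross (D2 t) (D1 t); split => //.
  by rewrite /z h2 crossK.
have Ez1 : derive1 z = fun s => cross (derive1 (derive1 y) s) (y s).
  by apply: funext => s; rewrite (S1 s).2.
have S2 : forall t, derivable (derive1 z) t 1 /\ derive1 (derive1 z) t =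
    cross (derive1 (derive1 y) t) (derive1 y t) - (2 * alpha t) *: cross (derive1 y t) (y t).
  move=> t; rewrite Ez1; have [h1 h2] := HD_cross (D3 t) (D1 t); split => //.
  by rewrite h2; apply: alg2 (Hode t).
pose G := fun s => cross (derive1 (derive1 y) s) (derive1 y s) - (2 * alpha s) *: cross (derive1 y s) (y s).
have Ez2 : derive1 (derive1 z) = G.
  by apply: funext => s; rewrite (S2 s).2.
have S3 := fun t => HD_G (D3 t) (D2 t) (D2 t) (D1 t) (da t).
have Ky : forall s, K (y s).
  move=> s; have [[hc _] _] := Hbd s.
  by case: Kreg => /closure_id -> *.
exists z; split.
- move=> t; split; [exact: (S1 t).1 | exact: (S2 t).1 | rewrite Ez2; exact: (S3 t).1].
- move=> t; rewrite Ez2 (S3 t).2 Ez1.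
  exact: alg3 (Hode t).
- move=> t; split; first exact: alg_nz (Hdet t).
  have [[_ hint] _] := Hbd t.
  have [c c0 Hc] := support Kreg Ky (D1 t) hint (fun x hx => ex_intro _ _ (ex_intro _ _ (alg_dec (Hdet t) hx))).
  exists c => //; split.
    by move=> x Kx; rewrite dotZ; apply: Hc.
  by rewrite dotZ dot_cross0 mulr0.
- move=> t; rewrite Ez2 Ez1 /G /z; exact: alg_det (Hdet t).
- move=> t.
  have HYZ := alg_frame (alpha t) (Hdet t).
  have U : frame alpha y t \in unitmx.
    rewrite unitmxE.
    have -> : \det (frame alpha y t) = \det (cols3 (derive1 (derive1 y) t) (derive1 y t) (y t)).
      rewrite /frame !det3 !mxE /=; ring.
    by rewrite Hdet unitr1.
  rewrite /frame in U *.
  rewrite -HYZ mulmxA -trmx_mul mulmxV // trmx1 mul1mx.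
  by rewrite Ez2 Ez1.
Qed.
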